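(* Let $\mathcal{X},\mathcal{A}$ be finite sets and $P_{A|X}$ a channel. There is a function $\varepsilon(n)\to0$ as $n\to\infty$ (depending only on $|\mathcal{X}|,|\mathcal{A}|$) such that for every $n$ and every list-decoding $(n,2^{nR},2^{nR_L},2^{-n\zeta})$-code for $P_{A|X}$, $$\zeta\ge\min_{Q_{XA}}\Big(D(Q_{A|X}\|P_{A|X}\mid Q_X)+\max\{R-R_L-I(X;A)_Q,\,0\}\Big)-\varepsilon(n),$$ the minimum being over probability distributions $Q_{XA}$ on $\mathcal{X}\times\mathcal{A}$.
   Context: Logarithms are base $2$; $[N]=\{0,\dots,N-1\}$; $P^{\times n}_{A|X}(a^n|x^n)=\prod_i P_{A|X}(a_i|x_i)$. A list-decoding $(n,2^{nR},L,\alpha)$-code consists of $\mathrm{Enc}\colon[2^{nR}]\to\mathcal{X}^n$ and a decoder assigning to each $a^n\in\mathcal{A}^n$ a subset $C_{a^n}\subseteq[2^{nR}]$ of size $L$, such that for all $m\in[2^{nR}]$, $\sum_{a^n: C_{a^n}\ni m}P^{\times n}_{A|X}(a^n|\mathrm{Enc}(m))\ge\alpha$. $I(X;A)_Q=H(X)_Q+H(A)_Q-H(X,A)_Q$; $D(Q_{A|X}\|P_{A|X}\mid Q_X)=\sum_x Q_X(x)\sum_a Q_{A|X}(a|x)\log\frac{Q_{A|X}(a|x)}{P_{A|X}(a|x)}$. *)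

(* Defs.v *)
From HB Require Import structures.
From mathcomp Require Import all_boot all_order all_algebra.
From mathcomp Require Import all_classical all_reals.
From mathcomp Require Import all_analysis.
Import numFieldNormedType.Exports.
Set Implicit Arguments. Unset Strict Implicit. Unset Printing Implicit Defensive.
Import Order.TTheory GRing.Theory Num.Theory.
Local Open Scope ring_scope.
Local Open Scope classical_set_scope.

Section InfoDefs.
Variable R : realType.

Definition log2 (x : R) : R := ln x / ln 2.

Definition is_channel (X A : finType) (P : X -> A -> R) : Prop :=
  (forall x a, 0 <= P x a) /\ (forall x, \sum_(a : A) P x a = 1).

Definition is_dist (T : finType) (Q : {ffun T -> R}) : Prop :=
  (forall t, 0 <= Q t) /\ \sum_(t : T) Q t = 1.

Definition entropy (T : finType) (p : T -> R) : R :=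
  - \sum_(t : T) (if p t == 0 then 0 else p t * log2 (p t)).

Definition margX (X A : finType) (Q : {ffun X * A -> R}) (x : X) : R :=
  \sum_(a : A) Q (x, a).
Definition margA (X A : finType) (Q : {ffun X * A -> R}) (a : A) : R :=
  \sum_(x : X) Q (x, a).

Definition mutinfo (X A : finType) (Q : {ffun X * A -> R}) : R :=
  entropy (margX Q) + entropy (margA Q) - entropy Q.

Definition condQ (X A : finType) (Q : {ffun X * A -> R}) (x : X) (a : A) : R :=
  Q (x, a) / margX Q x.

Definition klterm (q p : R) : \bar R :=
  if q == 0 then 0%E else if p == 0 then +oo%E else (q * log2 (q / p))%:E.

Definition condKL (X A : finType) (Q : {ffun X * A -> R}) (P : X -> A -> R)
  : \bar R :=
  (\sum_(x : X) (margX Q x)%:E * \sum_(a : A) klterm (condQ Q x a) (P x a))%E.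

Definition sp_objective (X A : finType) (P : X -> A -> R) (Rate RL : R)
  (Q : {ffun X * A -> R}) : \bar R :=
  (condKL Q P + (Num.max (Rate - RL - mutinfo Q) 0)%:E)%E.

(* min over Q_{XA} (taken as an infimum over the probability simplex,
   which is attained) *)
Definition sp_min (X A : finType) (P : X -> A -> R) (Rate RL : R) : \bar R :=
  ereal_inf [set sp_objective P Rate RL Q | Q in [set Q | is_dist Q]].

Definition is_list_code (X A : finType) (P : X -> A -> R) (n M L : nat)
  (alpha : R) (Enc : 'I_M -> {ffun 'I_n -> X})
  (dec : {ffun 'I_n -> A} -> {set 'I_M}) : Prop :=
  (forall an, #|dec an| = L) /\
  (forall m : 'I_M,
     alpha <= \sum_(an : {ffun 'I_n -> A} | m \in dec an)
                \prod_(i < n) P (Enc m i) (an i)).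

End InfoDefs.
Arguments is_list_code {R X A} P n M L alpha Enc dec.

(* Main.v *)
Require Import Defs.
From HB Require Import structures.
From mathcomp Require Import all_boot all_order all_algebra.
From mathcomp Require Import all_classical all_reals.
From mathcomp Require Import all_analysis.
From mathcomp Require Import ring lra.
Import numFieldNormedType.Exports.
Import Order.TTheory GRing.Theory Num.Theory.
Local Open Scope classical_set_scope.
Local Open Scope ring_scope.
Section Gen.
Variable R : realType.

Lemma ln_le_sub1 {y : R} : 0 < y -> ln y <= y - 1.
Proof. move=> y0; have := expR_ge1Dx (ln y); rewrite lnK // => h; lra. Qed.

Lemma gibbs_pt (w y : R) : 0 < w -> 0 < y -> w * (ln y - ln w) <= y - w.
Proof.
move=> w0 y0; have := ln_le_sub1 (divr_gt0 y0 w0).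
rewrite ln_div ?posrE // => h.
have := ler_wpM2l (ltW w0) h; rewrite mulrBr mulrBr mulr1 [w * (y / w)]mulrC divfK ?gt_eqF //.
Qed.

Lemma ln_prod (I : finType) (F : I -> R) : (forall i, 0 < F i) ->
  ln (\prod_i F i) = \sum_i ln (F i).
Proof.
move=> Fp.
suff [] : 0 < \prod_i F i /\ ln (\prod_i F i) = \sum_i ln (F i) by [].
apply: (big_rec2 (fun s p => 0 < p /\ ln p = s)); first by rewrite ln1.
move=> i s p _ [p0 <-]; split; first by rewrite mulr_gt0.
by rewrite lnM ?posrE.
Qed.

Lemma sum_ge_term (I : finType) (F : I -> R) j : (forall i, 0 <= F i) -> F j <= \sum_i F i.
Proof. move=> F0; rewrite (bigD1 j) //= lerDl sumr_ge0 //. Qed.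

Lemma entropyE (T : finType) (p : T -> R) : entropy p = - \sum_t p t * log2 (p t).
Proof. rewrite /entropy; congr (- _); apply: eq_bigr => t _; case: eqP => // ->; by rewrite mul0r. Qed.

End Gen.
Section Main.
Variables (R : realType) (X A : finType) (P : X -> A -> R) (n M L : nat)
  (Rate RL zeta : R) (Enc : 'I_M -> {ffun 'I_n -> X})
  (dec : {ffun 'I_n -> A} -> {set 'I_M}).
Hypotheses (HP : is_channel P) (n0 : (0 < n)%N)
  (HM : (M%:R : R) = 2 `^ (n%:R * Rate))
  (HL : (L%:R : R) = 2 `^ (n%:R * RL))
  (Hcode : is_list_code P n M L (2 `^ (- (n%:R * zeta))) Enc dec).

Local Notation T := {ffun 'I_n -> A}.
Definition pr m (an : T) := \prod_(i < n) P (Enc m i) (an i).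
Definition alpha m := \sum_(an : T | m \in dec an) pr m an.
Definition w m (an : T) := if m \in dec an then pr m an / (M%:R * alpha m) else 0.
Definition Qb : {ffun X * A -> R} := [ffun t => n%:R^-1 *
  \sum_(i < n) \sum_(m : 'I_M) \sum_(an : T) w m an * ((Enc m i, an i) == t)%:R].

Lemma P_ge0 x a : 0 <= P x a. Proof. by case: HP. Qed.
Lemma pr_ge0 m an : 0 <= pr m an.
Proof. by apply: prodr_ge0 => i _; apply: P_ge0. Qed.
Lemma a0_gt0 : 0 < 2 `^ (- (n%:R * zeta)) :> R.
Proof. by apply: powR_gt0. Qed.
Lemma alpha_ge m : 2 `^ (- (n%:R * zeta)) <= alpha m.
Proof. by case: Hcode => _ /(_ m). Qed.
Lemma alpha_gt0 m : 0 < alpha m.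
Proof. exact: lt_le_trans a0_gt0 (alpha_ge m). Qed.
Lemma M_gt0 : 0 < M%:R :> R.
Proof. by rewrite HM powR_gt0. Qed.
Lemma L_gt0 : 0 < L%:R :> R.
Proof. by rewrite HL powR_gt0. Qed.
Lemma w_ge0 m an : 0 <= w m an.
Proof.
rewrite /w; case: ifP => // _; apply: divr_ge0; first exact: pr_ge0.
by rewrite ltW // mulr_gt0 ?M_gt0 ?alpha_gt0.
Qed.
Lemma sum_w_m m : \sum_(an : T) w m an = M%:R^-1.
Proof.
rewrite /w -big_mkcond /= -mulr_suml -/(alpha m) invfM.
by rewrite mulrC divfK // gt_eqF // alpha_gt0.
Qed.
Lemma sum_w : \sum_(m : 'I_M) \sum_(an : T) w m an = 1.
Proof.
under eq_bigr do rewrite sum_w_m.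
rewrite sumr_const card_ord; have -> : (M%:R : R)^-1 *+ M = M%:R^-1 * M%:R by rewrite mulr_natr.
by rewrite mulVf // gt_eqF ?M_gt0.
Qed.

Lemma expect (F : X * A -> R) : \sum_t Qb t * F t =
  n%:R^-1 * \sum_(m : 'I_M) \sum_(an : T) w m an * \sum_(i < n) F (Enc m i, an i).
Proof.
under eq_bigr do rewrite ffunE -mulrA.
rewrite -mulr_sumr; congr (_ * _).
transitivity (\sum_(i < n) \sum_(m : 'I_M) \sum_(an : T) w m an * F (Enc m i, an i)).
  under eq_bigr do rewrite big_distrl /=.
  rewrite exchange_big /=; apply: eq_bigr => i _.
  under eq_bigr do rewrite big_distrl /=.
  rewrite exchange_big /=; apply: eq_bigr => m _.
  under eq_bigr do rewrite big_distrl /=.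
  rewrite exchange_big /=; apply: eq_bigr => an _.
  under eq_bigr do rewrite -mulrA.
  rewrite -mulr_sumr; congr (_ * _).
  rewrite (bigD1 (Enc m i, an i)) //= eqxx mul1r big1 ?addr0 // => t /negbTE.
  by rewrite eq_sym => ->; rewrite mul0r.
rewrite exchange_big /=; apply: eq_bigr => m _.
under [RHS]eq_bigr do rewrite mulr_sumr.
by rewrite exchange_big.
Qed.


Lemma Qb_ge0 t : 0 <= Qb t.
Proof.
rewrite ffunE mulr_ge0 ?invr_ge0 ?ler0n // sumr_ge0 // => i _.
rewrite sumr_ge0 // => m _; rewrite sumr_ge0 // => an _.
by rewrite mulr_ge0 ?w_ge0 ?ler0n.
Qed.

Lemma n_gt0 : 0 < n%:R :> R. Proof. by rewrite ltr0n. Qed.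

Lemma Qb_dist : is_dist Qb.
Proof.
split; first exact: Qb_ge0.
have := expect (fun _ => 1); under eq_bigr do rewrite mulr1; move=> ->.
under eq_bigr do under eq_bigr do rewrite sumr_const card_ord.
under eq_bigr do under eq_bigr do rewrite mulr_natr.
rewrite (eq_bigr (fun m => (\sum_(an : T) w m an) *+ n)); last by move=> m _; rewrite sumrMnl.
by rewrite sumrMnl sum_w -mulr_natr mul1r mulVf // gt_eqF ?n_gt0.
Qed.

Lemma w_neq0 m an : w m an != 0 -> (m \in dec an) /\ forall i, 0 < P (Enc m i) (an i).
Proof.
rewrite /w; case: ifP => [md|]; last by rewrite eqxx.
rewrite mulf_eq0 negb_or => /andP[pn _]; split => // i.
rewrite lt_def P_ge0 andbT; apply: contra pn => /eqP Pz.
by rewrite /pr; apply/prodf_eq0; exists i => //; apply/eqP.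
Qed.

Lemma Qb_P x a : P x a = 0 -> Qb (x, a) = 0.
Proof.
move=> Pz; rewrite ffunE big1 ?mulr0 // => i _.
rewrite big1 // => m _; rewrite big1 // => an _.
case: (eqVneq (w m an) 0) => [->|/w_neq0 [_ /(_ i) hp]]; first by rewrite mul0r.
case: eqP => [[ex ea]|_]; last by rewrite mulr0.
by move: hp; rewrite ex ea Pz ltxx.
Qed.

Lemma Qb_pos m an i : w m an != 0 -> 0 < Qb (Enc m i, an i).
Proof.
move=> wn; have w0 : 0 < w m an by rewrite lt_def wn w_ge0.
apply: (@lt_le_trans _ _ (n%:R^-1 * w m an)); first by rewrite mulr_gt0 ?invr_gt0 ?n_gt0.
rewrite ffunE ler_wpM2l ?invr_ge0 ?ler0n //.
apply: (le_trans _ (@sum_ge_term _ _ _ i _)); last first.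
  move=> j; rewrite sumr_ge0 // => m' _; rewrite sumr_ge0 // => an' _.
  by rewrite mulr_ge0 ?w_ge0 ?ler0n.
apply: (le_trans _ (@sum_ge_term _ _ _ m _)); last first.
  by move=> m'; rewrite sumr_ge0 // => an' _; rewrite mulr_ge0 ?w_ge0 ?ler0n.
apply: (le_trans _ (@sum_ge_term _ _ _ an _)); last by move=> an'; rewrite mulr_ge0 ?w_ge0 ?ler0n.
by rewrite eqxx mulr1.
Qed.

Lemma margX_ge x a : Qb (x, a) <= margX Qb x.
Proof. by apply: (@sum_ge_term _ _ (fun a => Qb (x, a)) a) => a'; apply: Qb_ge0. Qed.
Lemma margA_ge x a : Qb (x, a) <= margA Qb a.
Proof. by apply: (@sum_ge_term _ _ (fun x => Qb (x, a)) x) => x'; apply: Qb_ge0. Qed.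

Definition g (t : X * A) := log2 (condQ Qb t.1 t.2 / P t.1 t.2).
Definition h (t : X * A) := log2 (margA Qb t.2 / P t.1 t.2).

Lemma condKL_eq : condKL Qb P = (\sum_t Qb t * g t)%:E.
Proof.
have -> : \sum_t Qb t * g t = \sum_x \sum_a Qb (x, a) * g (x, a).
  by rewrite pair_bigA; apply: eq_bigr => -[x a].
rewrite /condKL -sumEFin.
apply: eq_bigr => x _.
case: (eqVneq (margX Qb x) 0) => [mz|mn].
  rewrite mz mul0e big1 // => a _.
  by rewrite (psumr_eq0P (fun a _ => Qb_ge0 (x,a)) mz) // mul0r.
have kl a : klterm (condQ Qb x a) (P x a) = (condQ Qb x a * g (x, a))%:E.
  rewrite /klterm; case: eqP => [->|cn]; first by rewrite mul0r.
  case: eqP => [Pz|_] //; exfalso; apply: cn.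
  by rewrite /condQ Qb_P // mul0r.
under eq_bigr do rewrite kl.
rewrite sumEFin -EFinM mulr_sumr; congr EFin; apply: eq_bigr => a _.
by rewrite mulrA /condQ [margX Qb x * _]mulrC divfK.
Qed.

Lemma ln2_gt0 : 0 < ln (2 : R). Proof. by apply: ln_gt0; rewrite ltr1n. Qed.

Lemma log2K y : log2 y * ln 2 = ln y :> R.
Proof. by rewrite /log2 divfK // gt_eqF ?ln2_gt0. Qed.

Lemma margX_pos m an i : w m an != 0 -> 0 < margX Qb (Enc m i).
Proof. move=> wn; exact: lt_le_trans (Qb_pos m an i wn) (margX_ge _ _). Qed.
Lemma margA_pos m an i : w m an != 0 -> 0 < margA Qb (an i).
Proof. move=> wn; exact: lt_le_trans (Qb_pos m an i wn) (margA_ge _ _). Qed.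

Lemma sum_g m an : w m an != 0 ->
  (\sum_i g (Enc m i, an i)) * ln 2 =
  ln (\prod_i condQ Qb (Enc m i) (an i)) - ln (pr m an).
Proof.
move=> wn; have [_ Pp] := w_neq0 m an wn.
have cp i : 0 < condQ Qb (Enc m i) (an i).
  by rewrite /condQ divr_gt0 ?(Qb_pos m an i wn) ?(margX_pos m an i wn).
rewrite /pr !ln_prod // -sumrB mulr_suml; apply: eq_bigr => i _.
by rewrite /g /= log2K ln_div ?posrE.
Qed.

Lemma sum_h m an : w m an != 0 ->
  (\sum_i h (Enc m i, an i)) * ln 2 =
  ln (\prod_i margA Qb (an i)) - ln (pr m an).
Proof.
move=> wn; have [_ Pp] := w_neq0 m an wn.
have cp i : 0 < margA Qb (an i) by apply: (margA_pos m an i wn).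
rewrite /pr !ln_prod // -sumrB mulr_suml; apply: eq_bigr => i _.
by rewrite /h /= log2K ln_div ?posrE.
Qed.

Lemma lnalpha m : - ln (alpha m) <= n%:R * zeta * ln 2.
Proof.
have := alpha_ge m; rewrite -ler_ln ?posrE ?a0_gt0 ?alpha_gt0 // ln_powR => hh.
lra.
Qed.

Lemma keybound (c : 'I_M -> T -> R) (K : R) : 0 < K ->
  (forall m an, 0 <= c m an) -> (forall m an, w m an != 0 -> 0 < c m an) ->
  \sum_(m : 'I_M) \sum_(an : T | m \in dec an) c m an <= K ->
  \sum_(m : 'I_M) \sum_(an : T) w m an * (ln (c m an) - ln (pr m an))
    <= ln K - ln M%:R + n%:R * zeta * ln 2.
Proof.
move=> K0 c0 cp csum.
set k := ln K - ln M%:R + n%:R * zeta * ln 2 - 1.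
have step m an : w m an * (ln (c m an) - ln (pr m an))
    <= (if m \in dec an then c m an / K else 0) + w m an * k.
  case: (eqVneq (w m an) 0) => [->|wn].
    rewrite !mul0r addr0; case: ifP => // _; exact: divr_ge0 (c0 _ _) (ltW K0).
  have [md Pp] := w_neq0 m an wn.
  have w0 : 0 < w m an by rewrite lt_def wn w_ge0.
  have pp : 0 < pr m an by apply: prodr_gt0.
  have Ma : 0 < M%:R * alpha m by rewrite mulr_gt0 ?M_gt0 ?alpha_gt0.
  have hw : pr m an = w m an * (M%:R * alpha m) by rewrite /w md divfK // gt_eqF.
  have lpr : ln (pr m an) = ln (w m an) + ln M%:R + ln (alpha m).
    by rewrite hw lnM ?posrE // lnM ?posrE ?M_gt0 ?alpha_gt0 // addrA.
  have cK : 0 < c m an / K by rewrite divr_gt0 ?cp.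
  have lc : ln (c m an) = ln (c m an / K) + ln K by rewrite ln_div ?posrE ?cp // subrK.
  have gb := @gibbs_pt R _ _ w0 cK.
  have la := ler_wpM2l (ltW w0) (lnalpha m).
  rewrite md lpr lc /k.
  lra.
apply: (le_trans (ler_sum _ (fun m _ => ler_sum _ (fun an _ => step m an)))).
under eq_bigr do rewrite big_split /=.
rewrite big_split /=.
under eq_bigr do rewrite -big_mkcond -mulr_suml.
rewrite -mulr_suml.
under [X in _ + X]eq_bigr do rewrite -mulr_suml.
rewrite -mulr_suml sum_w mul1r.
have : (\sum_(m : 'I_M) \sum_(an : T | m \in dec an) c m an) / K <= 1.
  by rewrite ler_pdivrMr // mul1r.
rewrite /k; lra.
Qed.

Lemma avg_bound (f : X * A -> R) (c : 'I_M -> T -> R) (B : R) :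
  (forall m an, w m an != 0 ->
     (\sum_i f (Enc m i, an i)) * ln 2 = ln (c m an) - ln (pr m an)) ->
  \sum_(m : 'I_M) \sum_(an : T) w m an * (ln (c m an) - ln (pr m an))
    <= n%:R * B * ln 2 ->
  \sum_t Qb t * f t <= B.
Proof.
move=> hf hb; rewrite expect.
set S := \sum_(m : 'I_M) _.
have SE : S * ln 2 = \sum_(m : 'I_M) \sum_(an : T) w m an * (ln (c m an) - ln (pr m an)).
  rewrite /S mulr_suml; apply: eq_bigr => m _; rewrite mulr_suml; apply: eq_bigr => an _.
  case: (eqVneq (w m an) 0) => [->|wn]; first by rewrite !mul0r.
  by rewrite -mulrA hf.
have : S <= n%:R * B.
  by rewrite -(ler_pM2r ln2_gt0) SE.
have ni : 0 < n%:R^-1 :> R by rewrite invr_gt0 n_gt0.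
by rewrite -(ler_pM2l ni) mulrA mulVf ?mul1r // gt_eqF ?n_gt0.
Qed.

Lemma condQ_ge0 x a : 0 <= condQ Qb x a.
Proof. by rewrite /condQ divr_ge0 ?Qb_ge0 // sumr_ge0 // => a' _; exact: Qb_ge0. Qed.

Lemma sum_condQ x : \sum_a condQ Qb x a <= 1.
Proof.
rewrite /condQ -mulr_suml -/(margX Qb x).
case: (eqVneq (margX Qb x) 0) => [->|mn]; first by rewrite mul0r.
by rewrite divff.
Qed.

Lemma ineqA : \sum_t Qb t * g t <= zeta.
Proof.
apply: (@avg_bound g (fun m an => \prod_i condQ Qb (Enc m i) (an i)) zeta).
  by move=> m an wn; rewrite sum_g.
have := @keybound (fun m an => \prod_i condQ Qb (Enc m i) (an i)) M%:R M_gt0.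
rewrite subrr add0r; apply.
- by move=> m an; apply: prodr_ge0 => i _; exact: condQ_ge0.
- move=> m an wn; apply: prodr_gt0 => i _.
  by rewrite /condQ divr_gt0 ?(Qb_pos m an i wn) ?(margX_pos m an i wn).
- apply: (@le_trans _ _ (\sum_(m : 'I_M) 1)); last by rewrite sumr_const card_ord.
  apply: ler_sum => m _.
  apply: (@le_trans _ _ (\sum_(an : T) \prod_i condQ Qb (Enc m i) (an i))).
    rewrite [X in _ <= X](bigID (fun an => m \in dec an)) /= lerDl.
    by apply: sumr_ge0 => an _; apply: prodr_ge0 => i _; exact: condQ_ge0.
  rewrite -(bigA_distr_bigA (fun i a => condQ Qb (Enc m i) a)) /=.
  apply: prodr_ile1 => i _; rewrite sum_condQ andbT.
  by apply: sumr_ge0 => a _; exact: condQ_ge0.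
Qed.

Lemma sum_margA : \sum_a margA Qb a = 1.
Proof.
rewrite /margA exchange_big /= pair_bigA /= -[RHS](proj2 Qb_dist).
by apply: eq_bigr => -[x a].
Qed.

Lemma ineqB : \sum_t Qb t * h t <= RL - Rate + zeta.
Proof.
apply: (@avg_bound h (fun m an => \prod_i margA Qb (an i)) (RL - Rate + zeta)).
  by move=> m an wn; rewrite sum_h.
have := @keybound (fun m an => \prod_i margA Qb (an i)) L%:R L_gt0.
have -> : ln L%:R - ln M%:R + n%:R * zeta * ln 2 = n%:R * (RL - Rate + zeta) * ln (2 : R).
  rewrite HL HM !ln_powR; ring.
apply.
- by move=> m an; apply: prodr_ge0 => i _; apply: sumr_ge0 => x _; exact: Qb_ge0.
- move=> m an wn; apply: prodr_gt0 => i _; exact: (margA_pos m an i wn).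
- under eq_bigr do rewrite big_mkcond /=.
  rewrite exchange_big /=.
  under eq_bigr do rewrite -big_mkcond /= sumr_const (proj1 Hcode).
  rewrite sumrMnl -(bigA_distr_bigA (fun i a => margA Qb a)) /=.
  under eq_bigr do rewrite sum_margA.
  by rewrite big1 // -mulr_natr mul1r.
Qed.

Lemma identC : \sum_t Qb t * g t - mutinfo Qb = \sum_t Qb t * h t.
Proof.
have e t : Qb t * h t = Qb t * g t + Qb t * log2 (margX Qb t.1)
    + Qb t * log2 (margA Qb t.2) - Qb t * log2 (Qb t).
  case: t => x a /=.
  case: (eqVneq (Qb (x, a)) 0) => [->|qn]; first by rewrite !mul0r !addr0 subr0.
  have q0 : 0 < Qb (x, a) by rewrite lt_def qn Qb_ge0.
  have mx : 0 < margX Qb x by exact: lt_le_trans q0 (margX_ge _ _).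
  have ma : 0 < margA Qb a by exact: lt_le_trans q0 (margA_ge _ _).
  have Pp : 0 < P x a.
    rewrite lt_def P_ge0 andbT; apply: contra qn => /eqP Pz; apply/eqP; exact: Qb_P.
  rewrite /g /h /log2 /condQ /= !ln_div ?posrE ?divr_gt0 //.
  ring.
rewrite (eq_bigr _ (fun t _ => e t)) sumrB !big_split /=.
have eX : \sum_x margX Qb x * log2 (margX Qb x) = \sum_t Qb t * log2 (margX Qb t.1).
  transitivity (\sum_x \sum_a Qb (x, a) * log2 (margX Qb x)); last first.
    by rewrite pair_bigA; apply: eq_bigr => -[x a].
  by apply: eq_bigr => x _; rewrite /margX mulr_suml.
have eA : \sum_a margA Qb a * log2 (margA Qb a) = \sum_t Qb t * log2 (margA Qb t.2).
  transitivity (\sum_x \sum_a Qb (x, a) * log2 (margA Qb a)); last first.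
    by rewrite pair_bigA; apply: eq_bigr => -[x a].
  rewrite exchange_big /=.
  by apply: eq_bigr => a _; rewrite /margA mulr_suml.
rewrite /mutinfo !entropyE eX eA.
lra.
Qed.

Lemma final_bound : (sp_min P Rate RL - (0:R)%:E <= zeta%:E)%E.
Proof.
rewrite sube0; apply: le_trans; first apply: ereal_inf_lbound.
  by exists Qb; first exact: Qb_dist.
rewrite /sp_objective condKL_eq -EFinD lee_fin.
have hA := ineqA; have hB := ineqB; have hC := identC.
case: (leP (Rate - RL - mutinfo Qb) 0) => hm.
  by rewrite addr0.
lra.
Qed.
End Main.

Theorem mainTheorem5 (R : realType) (kX kA : nat) :
  exists eps : nat -> R,
    eps @ \oo --> (0 : R) /\
    forall (X A : finType), #|X| = kX -> #|A| = kA ->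
    forall (P : X -> A -> R), is_channel P ->
    forall (n M L : nat) (Rate RL zeta : R)
           (Enc : 'I_M -> {ffun 'I_n -> X})
           (dec : {ffun 'I_n -> A} -> {set 'I_M}),
      (0 < n)%N ->
      (M%:R : R) = 2 `^ (n%:R * Rate) ->
      (L%:R : R) = 2 `^ (n%:R * RL) ->
      is_list_code P n M L (2 `^ (- (n%:R * zeta))) Enc dec ->
      (sp_min P Rate RL - (eps n)%:E <= zeta%:E)%E.
Proof.
exists (fun _ => 0); split; first exact: cvg_cst.
move=> X A _ _ P HP n M L Rate RL zeta Enc dec n0 HM HL Hcode.
by eapply final_bound; eassumption.
Qed.
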